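(* Let $I$ be an ideal on a cardinal $\kappa$ and let $\theta<\kappa$ be a regular cardinal. The following are equivalent: (1) $I$ is weakly $\theta$-saturated and $\theta$-indecomposable. (2) Whenever $\langle B_i:i<\theta\rangle$ is a $\subseteq$-increasing sequence of subsets of $\kappa$, there is $i^*<\theta$ such that $B_i=_I\bigcup_{j<\theta}B_j$ for all $i$ with $i^*\leq i<\theta$. (3) Whenever $\langle A_i:i<\theta\rangle$ is a sequence of $I$-positive subsets of $\kappa$, we have $\bigcap_{i<\theta}\bigcup_{i\leq j<\theta}A_j\neq\emptyset$. (4) If $\langle S_\alpha:\alpha<\kappa\rangle$ is a sequence of sets of ordinals with $|S_\alpha|<\theta$ for all $\alpha$, then every sequence $\langle h_i:i<\theta\rangle$ of functions in $\prod_{\alpha<\kappa}S_\alpha$ that is increasing in the pointwise order ($i<j$ implies $h_i(\alpha)\leq h_j(\alpha)$ for all $\alpha$) is eventually constant modulo $I$, i.e. there is $i^*<\theta$ with $h_i=_I h_{i^*}$ for all $i\geq i^*$. (5) Every function $f:\kappa\to\theta$ is bounded below $\theta$ almost everywhere, i.e. there is $\beta<\theta$ with $\{\alpha<\kappa: f(\alpha)\geq\beta\}\in I$.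
   Context: By an ideal on a cardinal $\kappa$ we mean a proper ideal on $\kappa$ containing all bounded subsets of $\kappa$. A set is $I$-positive if it is not in $I$. $A=_I B$ means $A\setminus B\in I$ and $B\setminus A\in I$; for functions, $f=_I g$ means $\{\alpha:f(\alpha)\neq g(\alpha)\}\in I$. $I$ is weakly $\theta$-saturated if there is no partition of $\kappa$ into $\theta$ pairwise disjoint $I$-positive sets. $I$ is $\theta$-indecomposable if whenever $\langle A_i:i<\theta\rangle$ are subsets of $\kappa$ with $\bigcup_{i<\theta}A_i\notin I$, there is $w\subseteq\theta$ with $|w|<\theta$ and $\bigcup_{i\in w}A_i\notin I$. *)

(* Defs.v *)
(* Cardinals/ordinals are represented by well-ordered types. *)
From Stdlib Require Import Classical.

Set Implicit Arguments.

Definition card_le (A B : Type) : Prop := exists f : A -> B, forall x y, f x = f y -> x = y.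
Definition card_lt (A B : Type) : Prop := card_le A B /\ ~ card_le B A.

Definition setT_of (X : Type) (S : X -> Prop) : Type := { x : X | S x }.

Definition is_wellorder (X : Type) (lt : X -> X -> Prop) : Prop :=
  (forall x, ~ lt x x) /\
  (forall x y z, lt x y -> lt y z -> lt x z) /\
  (forall x y, lt x y \/ x = y \/ lt y x) /\
  well_founded lt.

Definition leo (X : Type) (lt : X -> X -> Prop) (x y : X) : Prop := lt x y \/ x = y.

(* A cardinal = an initial ordinal: a well-order each of whose proper initial
   segments has strictly smaller cardinality than the whole. *)
Definition is_cardinal (X : Type) (lt : X -> X -> Prop) : Prop :=
  is_wellorder lt /\
  forall a : X, ~ card_le X (setT_of (fun y => lt y a)).

Definition is_regular (X : Type) (lt : X -> X -> Prop) : Prop :=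
  is_cardinal lt /\ card_le nat X /\
  forall C : X -> Prop, (forall x, exists y, C y /\ leo lt x y) ->
     card_le X (setT_of C).

Definition is_ideal (K : Type) (ltK : K -> K -> Prop) (I : (K -> Prop) -> Prop) : Prop :=
  I (fun _ => False) /\
  ~ I (fun _ => True) /\
  (forall A B : K -> Prop, (forall x, A x -> B x) -> I B -> I A) /\
  (forall A B : K -> Prop, I A -> I B -> I (fun x => A x \/ B x)) /\
  (forall (A : K -> Prop) (a : K), (forall x, A x -> ltK x a) -> I A).

Definition positive (K : Type) (I : (K -> Prop) -> Prop) (A : K -> Prop) : Prop := ~ I A.

Definition eq_mod (K : Type) (I : (K -> Prop) -> Prop) (A B : K -> Prop) : Prop :=
  I (fun x => A x /\ ~ B x) /\ I (fun x => B x /\ ~ A x).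

Definition weakly_saturated (K T : Type) (I : (K -> Prop) -> Prop) : Prop :=
  ~ exists P : T -> (K -> Prop),
      (forall i, positive I (P i)) /\
      (forall i j x, i <> j -> P i x -> P j x -> False) /\
      (forall x, exists i, P i x).

Definition indecomposable (K T : Type) (I : (K -> Prop) -> Prop) : Prop :=
  forall A : T -> (K -> Prop),
    ~ I (fun x => exists i, A i x) ->
    exists w : T -> Prop, card_lt (setT_of w) T /\
                          ~ I (fun x => exists i, w i /\ A i x).

(* Main.v *)
Require Import Defs.
From Stdlib Require Import Classical ClassicalEpsilon ProofIrrelevance FunctionalExtensionality.
Set Implicit Arguments.

Lemma choice' (A B : Type) (R : A -> B -> Prop) :
  (forall x, exists y, R x y) -> exists f : A -> B, forall x, R x (f x).
Proof.
  intro H. exists (fun x => proj1_sig (constructive_indefinite_description _ (H x))).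
  intro x. exact (proj2_sig (constructive_indefinite_description _ (H x))).
Qed.

Lemma card_le_trans A B C : card_le A B -> card_le B C -> card_le A C.
Proof. intros [f Hf] [g Hg]. exists (fun x => g (f x)). auto. Qed.

Lemma card_le_sub (A : Type) (P : A -> Prop) : card_le (setT_of P) A.
Proof.
  exists (@proj1_sig _ _). intros [x Hx] [y Hy]; simpl; intro E. subst.
  f_equal. apply proof_irrelevance.
Qed.

Lemma card_le_incl (A : Type) (P Q : A -> Prop) :
  (forall x, P x -> Q x) -> card_le (setT_of P) (setT_of Q).
Proof.
  intro H. exists (fun p => exist Q (proj1_sig p) (H _ (proj2_sig p))).
  intros [x Hx] [y Hy] E. simpl in E. injection E; intro; subst.
  f_equal; apply proof_irrelevance.
Qed.

Section WO.
End WO.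

Lemma wo_irr X (lt : X -> X -> Prop) (H : is_wellorder lt) x : ~ lt x x.
Proof. apply H. Qed.
Lemma wo_trans X (lt : X -> X -> Prop) (H : is_wellorder lt) x y z : lt x y -> lt y z -> lt x z.
Proof. apply H. Qed.
Lemma wo_tri X (lt : X -> X -> Prop) (H : is_wellorder lt) x y : lt x y \/ x = y \/ lt y x.
Proof. apply H. Qed.
Lemma lt_leo_trans X (lt : X -> X -> Prop) (H : is_wellorder lt) x y z :
  lt x y -> leo lt y z -> lt x z.
Proof. intros h [h'|h']; [eapply wo_trans; eauto | subst; auto]. Qed.
Lemma leo_lt_trans X (lt : X -> X -> Prop) (H : is_wellorder lt) x y z :
  leo lt x y -> lt y z -> lt x z.
Proof. intros [h|h] h'; [eapply wo_trans; eauto | subst; auto]. Qed.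
Lemma leo_trans X (lt : X -> X -> Prop) (H : is_wellorder lt) x y z :
  leo lt x y -> leo lt y z -> leo lt x z.
Proof. intros [h|h] h'. left; eapply lt_leo_trans; eauto. subst; auto. Qed.
Lemma not_lt_leo X (lt : X -> X -> Prop) (H : is_wellorder lt) x y :
  ~ lt x y -> leo lt y x.
Proof. intro h. destruct (wo_tri H x y) as [a|[a|a]]. contradiction. right; auto. left; auto. Qed.
Lemma leo_not_lt X (lt : X -> X -> Prop) (H : is_wellorder lt) x y :
  leo lt x y -> ~ lt y x.
Proof. intros h h'. apply (wo_irr H x). eapply leo_lt_trans; eauto. Qed.
Lemma leo_antisym X (lt : X -> X -> Prop) (H : is_wellorder lt) x y :
  leo lt x y -> leo lt y x -> x = y.
Proof. intros [h|h] h'; auto. exfalso. exact (leo_not_lt H h' h). Qed.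
Lemma leo_refl X (lt : X -> X -> Prop) x : leo lt x x.
Proof. right; reflexivity. Qed.

Lemma reg_wo T (ltT : T -> T -> Prop) (HT : is_regular ltT) : is_wellorder ltT.
Proof. apply HT. Qed.

Lemma reg_inh T (ltT : T -> T -> Prop) (HT : is_regular ltT) : inhabited T.
Proof. destruct HT as [_ [[e _] _]]. exact (inhabits (e 0)). Qed.

Lemma reg_nomax T (ltT : T -> T -> Prop) (HT : is_regular ltT) :
  forall x, exists y, ltT x y.
Proof.
  intro x. apply NNPP; intro Hn.
  assert (W := reg_wo HT).
  destruct HT as [_ [[e He] Hc]].
  destruct (Hc (fun y => y = x)) as [g Hg].
  { intro z. exists x. split; auto. apply not_lt_leo; auto. intro h; apply Hn; eauto. }
  assert (E : g (e 0) = g (e 1)).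
  { destruct (g (e 0)) as [a Ha]; destruct (g (e 1)) as [b Hb]. subst. f_equal; apply proof_irrelevance. }
  apply Hg, He in E. discriminate.
Qed.

Lemma reg_bounded T (ltT : T -> T -> Prop) (HT : is_regular ltT) :
  forall P : T -> Prop, ~ card_le T (setT_of P) -> exists u, forall y, P y -> leo ltT y u.
Proof.
  intros P H. apply NNPP; intro Hn. apply H. apply HT. intro x.
  apply NNPP; intro Hm. apply Hn. exists x. intros y Py.
  apply not_lt_leo. apply HT. intro h. apply Hm. exists y. split; auto. left; auto.
Qed.

Lemma seg_small T (ltT : T -> T -> Prop) (HT : is_regular ltT) t :
  ~ card_le T (setT_of (fun y => ltT y t)).
Proof. apply HT. Qed.

Lemma I_sub K (ltK : K -> K -> Prop) I (HI : is_ideal ltK I) (A B : K -> Prop) :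
  (forall x, A x -> B x) -> I B -> I A.
Proof. apply HI. Qed.
Lemma I_union K (ltK : K -> K -> Prop) I (HI : is_ideal ltK I) (A B : K -> Prop) :
  I A -> I B -> I (fun x => A x \/ B x).
Proof. apply HI. Qed.

Lemma c5_c1 K (ltK : K -> K -> Prop) T (ltT : T -> T -> Prop) (HT : is_regular ltT)
  I (HI : is_ideal ltK I) :
  (forall f : K -> T, exists beta : T, I (fun a => leo ltT beta (f a))) ->
  weakly_saturated T I /\ indecomposable T I.
Proof.
  intro H5. assert (W := reg_wo HT). split.
  - intros [P [Hpos [Hdis Hcov]]].
    destruct (choice' _ Hcov) as [f Hf].
    destruct (H5 f) as [b Hb]. apply (Hpos b).
    eapply I_sub; [exact HI| |exact Hb]. intros a Pa.
    destruct (classic (b = f a)) as [e|n]. right; auto.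
    exfalso; exact (Hdis _ _ _ n Pa (Hf a)).
  - intros A HA.
    destruct (reg_inh HT) as [t0].
    assert (Hc : forall a, exists i, (exists j, A j a) -> A i a).
    { intro a. destruct (classic (exists j, A j a)) as [[j Hj]|n].
      exists j; auto. exists t0; intro h; contradiction. }
    destruct (choice' _ Hc) as [f Hf].
    destruct (H5 f) as [b Hb].
    exists (fun i => ltT i b). split.
    + split. apply card_le_sub. apply seg_small; auto.
    + intro Hw. apply HA.
      eapply I_sub; [exact HI| |exact (I_union HI _ _ Hw Hb)].
      intros a Ha. specialize (Hf a Ha).
      destruct (classic (ltT (f a) b)) as [l|n].
      left. exists (f a); auto. right. apply not_lt_leo; auto.
Qed.

Lemma c5_c3 K (ltK : K -> K -> Prop) T (ltT : T -> T -> Prop) (HT : is_regular ltT)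
  I (HI : is_ideal ltK I) :
  (forall f : K -> T, exists beta : T, I (fun a => leo ltT beta (f a))) ->
  forall A : T -> (K -> Prop),
      (forall i, positive I (A i)) ->
      exists x : K, forall i, exists j, leo ltT i j /\ A j x.
Proof.
  intros H5 A HA. assert (W := reg_wo HT). apply NNPP; intro Hn.
  assert (Hc : forall x, exists i, forall j, leo ltT i j -> ~ A j x).
  { intro x. apply NNPP; intro Hm. apply Hn. exists x. intro i.
    apply NNPP; intro Hk. apply Hm. exists i. intros j Hj Aj. apply Hk; eauto. }
  destruct (choice' _ Hc) as [f Hf].
  destruct (H5 f) as [b Hb]. apply (HA b).
  eapply I_sub; [exact HI| |exact Hb]. intros a Aa.
  apply NNPP; intro h. apply (Hf a b); auto. apply not_lt_leo; auto.
  intro l. apply h. left; auto.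
Qed.

Lemma c5_c2 K (ltK : K -> K -> Prop) T (ltT : T -> T -> Prop) (HT : is_regular ltT)
  I (HI : is_ideal ltK I) :
  (forall f : K -> T, exists beta : T, I (fun a => leo ltT beta (f a))) ->
  forall B : T -> (K -> Prop),
      (forall i j x, leo ltT i j -> B i x -> B j x) ->
      exists istar : T, forall i, leo ltT istar i ->
        eq_mod I (B i) (fun x => exists j, B j x).
Proof.
  intros H5 B HB. assert (W := reg_wo HT).
  destruct (reg_inh HT) as [t0].
  assert (Hc : forall a, exists i, (exists j, B j a) -> B i a).
  { intro a. destruct (classic (exists j, B j a)) as [[j Hj]|n].
    exists j; auto. exists t0; intro h; contradiction. }
  destruct (choice' _ Hc) as [f Hf].
  destruct (H5 f) as [b Hb]. exists b. intros i Hi. split.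
  - eapply I_sub; [exact HI| |exact (proj1 HI)]. intros x [h1 h2]. apply h2; eauto.
  - eapply I_sub; [exact HI| |exact Hb]. intros x [Ux nB].
    specialize (Hf x Ux). destruct (classic (leo ltT (f x) i)) as [l|n].
    exfalso; apply nB; eauto.
    left. eapply leo_lt_trans; eauto.
    destruct (wo_tri W (f x) i) as [q|[q|q]]; auto; exfalso; apply n; [left|right]; auto.
Qed.

Lemma c2_c5 K (ltK : K -> K -> Prop) T (ltT : T -> T -> Prop) (HT : is_regular ltT)
  I (HI : is_ideal ltK I) :
  (forall B : T -> (K -> Prop),
      (forall i j x, leo ltT i j -> B i x -> B j x) ->
      exists istar : T, forall i, leo ltT istar i ->
        eq_mod I (B i) (fun x => exists j, B j x)) ->
  (forall f : K -> T, exists beta : T, I (fun a => leo ltT beta (f a))).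
Proof.
  intros H2 f. assert (W := reg_wo HT).
  destruct (H2 (fun i a => ltT (f a) i)) as [b Hb].
  { intros i j x l h. eapply lt_leo_trans; eauto. }
  exists b. destruct (Hb b (leo_refl _ _)) as [_ Hb2].
  eapply I_sub; [exact HI| |exact Hb2]. intros a l. split.
  destruct (reg_nomax HT (f a)) as [j Hj]. exists j; auto.
  apply leo_not_lt; auto.
Qed.

Lemma c3_c5 K (ltK : K -> K -> Prop) T (ltT : T -> T -> Prop) (HT : is_regular ltT)
  I (HI : is_ideal ltK I) :
  (forall A : T -> (K -> Prop),
      (forall i, positive I (A i)) ->
      exists x : K, forall i, exists j, leo ltT i j /\ A j x) ->
  (forall f : K -> T, exists beta : T, I (fun a => leo ltT beta (f a))).
Proof.
  intros H3 f. assert (W := reg_wo HT). apply NNPP; intro Hn.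
  destruct (H3 (fun i a => leo ltT i (f a))) as [x Hx].
  { intros i Hi. apply Hn. exists i; auto. }
  destruct (reg_nomax HT (f x)) as [i Hi].
  destruct (Hx i) as [j [h1 h2]].
  apply (wo_irr W (f x)). eapply lt_leo_trans; eauto. eapply leo_trans; eauto.
Qed.

Lemma c5_c4 K (ltK : K -> K -> Prop) T (ltT : T -> T -> Prop) (HT : is_regular ltT)
  I (HI : is_ideal ltK I) :
  (forall f : K -> T, exists beta : T, I (fun a => leo ltT beta (f a))) ->
  forall (O : Type) (ltO : O -> O -> Prop), is_wellorder ltO ->
      forall S : K -> (O -> Prop),
      (forall a, card_lt (setT_of (S a)) T) ->
      forall h : T -> K -> O,
      (forall i a, S a (h i a)) ->
      (forall i j a, ltT i j -> leo ltO (h i a) (h j a)) ->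
      exists istar : T, forall i, leo ltT istar i ->
        I (fun a => h i a <> h istar a).
Proof.
  intros H5 O ltO WO S HS h HhS Hmono. assert (W := reg_wo HT).
  assert (Hm : forall i j a, leo ltT i j -> leo ltO (h i a) (h j a)).
  { intros i j a [l|e]. auto. subst; apply leo_refl. }
  assert (Hg : forall a, exists g, forall i, leo ltT g i -> h i a = h g a).
  { intro a. destruct (reg_inh HT) as [t0].
    assert (Hc : forall v : O, exists i, (exists i', h i' a = v) -> h i a = v).
    { intro v. destruct (classic (exists i', h i' a = v)) as [[i Hi]|n].
      exists i; auto. exists t0; intro; contradiction. }
    destruct (choice' _ Hc) as [c Hc'].
    destruct (@reg_bounded _ _ HT (fun i => exists v, (exists i', h i' a = v) /\ i = c v)) as [g Hg].
    { intro Hle. apply (proj2 (HS a)). eapply card_le_trans; [exact Hle|].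
      exists (fun p => exist (S a) (h (proj1_sig p) a) (HhS _ a)).
      intros [i Pi] [j Pj] E. simpl in E. injection E; intro E'.
      assert (i = j).
      { destruct Pi as [v [[i' Hi'] ei]]; destruct Pj as [v' [[j' Hj'] ej]].
        assert (Hv : h i a = v) by (rewrite ei; apply Hc'; eauto).
        assert (Hv' : h j a = v') by (rewrite ej; apply Hc'; eauto).
        rewrite ei, ej; congruence. }
      subst j. f_equal; apply proof_irrelevance. }
    exists g. intros i Hi.
    assert (Hk := Hc' (h i a) (ex_intro _ i eq_refl)).
    assert (Hkg : leo ltT (c (h i a)) g).
    { apply Hg. exists (h i a). split; eauto. }
    remember (c (h i a)) as k.
    apply (leo_antisym WO).
    - rewrite <- Hk. apply Hm; auto.
    - apply Hm; auto. }
  destruct (choice' _ Hg) as [G HG].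
  destruct (H5 G) as [b Hb]. exists b. intros i Hi.
  eapply I_sub; [exact HI| |exact Hb]. intros a Ha.
  apply NNPP; intro n. apply Ha.
  assert (l : leo ltT (G a) b).
  { apply not_lt_leo; auto. intro q; apply n; left; auto. }
  rewrite (HG a i), (HG a b); auto. eapply leo_trans; eauto.
Qed.

Lemma c4_c5 K (ltK : K -> K -> Prop) T (ltT : T -> T -> Prop) (HT : is_regular ltT)
  I (HI : is_ideal ltK I) :
  (forall (O : Type) (ltO : O -> O -> Prop), is_wellorder ltO ->
      forall S : K -> (O -> Prop),
      (forall a, card_lt (setT_of (S a)) T) ->
      forall h : T -> K -> O,
      (forall i a, S a (h i a)) ->
      (forall i j a, ltT i j -> leo ltO (h i a) (h j a)) ->
      exists istar : T, forall i, leo ltT istar i ->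
        I (fun a => h i a <> h istar a)) ->
  (forall f : K -> T, exists beta : T, I (fun a => leo ltT beta (f a))).
Proof.
  intros H4 f. assert (W := reg_wo HT).
  set (h := fun i a => if excluded_middle_informative (ltT i (f a)) then i else f a).
  assert (HS : forall a, card_lt (setT_of (fun y => leo ltT y (f a))) T).
  { intro a. split. apply card_le_sub. intro Hle.
    destruct (reg_nomax HT (f a)) as [s Hs]. apply (seg_small HT s).
    eapply card_le_trans; [exact Hle|]. apply card_le_incl.
    intros y Hy; eapply leo_lt_trans; eauto. }
  assert (HhS : forall i a, leo ltT (h i a) (f a)).
  { intros i a. unfold h. destruct (excluded_middle_informative (ltT i (f a))).
    left; auto. apply leo_refl. }
  assert (Hmono : forall i j a, ltT i j -> leo ltT (h i a) (h j a)).
  { intros i j a l. unfold h.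
    destruct (excluded_middle_informative (ltT i (f a))) as [p|p];
    destruct (excluded_middle_informative (ltT j (f a))) as [q|q].
    - left; auto.
    - left; auto.
    - exfalso. apply (wo_irr W j). eapply (lt_leo_trans W); [exact q|].
      left. eapply (leo_lt_trans W); [|exact l]. apply not_lt_leo; auto.
    - apply leo_refl. }
  destruct (H4 T ltT W (fun a y => leo ltT y (f a)) HS h HhS Hmono) as [s Hs].
  destruct (reg_nomax HT s) as [b Hb]. exists b.
  specialize (Hs b (or_introl Hb)).
  eapply I_sub; [exact HI| |exact Hs]. intros a l.
  assert (sa : ltT s (f a)) by (eapply lt_leo_trans; eauto).
  assert (E1 : h s a = s).
  { unfold h. destruct (excluded_middle_informative (ltT s (f a))); auto; contradiction. }
  assert (E2 : h b a = b).
  { unfold h. destruct (excluded_middle_informative (ltT b (f a))); auto.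
    apply (leo_antisym W). apply not_lt_leo; auto. exact l. }
  change (h b a <> h s a). rewrite E1, E2. intro e; subst. exact (wo_irr W _ Hb).
Qed.

Lemma c1_c5 K (ltK : K -> K -> Prop) T (ltT : T -> T -> Prop) (HT : is_regular ltT)
  I (HI : is_ideal ltK I) :
  weakly_saturated T I /\ indecomposable T I ->
  (forall f : K -> T, exists beta : T, I (fun a => leo ltT beta (f a))).
Proof.
  intros [WS IND] f. assert (W := reg_wo HT). apply NNPP; intro Hn.
  assert (Hpos : forall b, ~ I (fun a => leo ltT b (f a))) by (intros b Hb; apply Hn; eauto).
  assert (Hg : forall b, exists c, ~ I (fun a => leo ltT b (f a) /\ ltT (f a) c)).
  { intro b. destruct (IND (fun i a => f a = i /\ leo ltT b i)) as [w [Hw Hwp]].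
    { intro Hu. apply (Hpos b). eapply I_sub; [exact HI| |exact Hu]. intros a l. exists (f a); auto. }
    destruct (@reg_bounded _ _ HT w (proj2 Hw)) as [d Hd].
    destruct (reg_nomax HT d) as [c Hc]. exists c. intro Hi. apply Hwp.
    eapply I_sub; [exact HI| |exact Hi]. intros a [i [wi [e l]]]. subst i. split; auto.
    eapply (leo_lt_trans W); eauto. }
  destruct (choice' _ Hg) as [g Hgp].
  destruct (reg_inh HT) as [t0].
  set (ub := fun P : T -> Prop => epsilon (inhabits t0) (fun u => forall y, P y -> leo ltT y u)).
  set (G := fun t (rec : forall s, ltT s t -> T) =>
              g (ub (fun y => exists s (H : ltT s t), y = rec s H))).
  set (F := Fix (proj2 (proj2 (proj2 W))) (fun _ => T) G).
  assert (HF : forall t, F t = g (ub (fun y => exists s (H : ltT s t), y = F s))).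
  { intro t. unfold F. rewrite Fix_eq. reflexivity.
    intros x f1 f2 Hext.
    assert (f1 = f2) by (apply functional_extensionality_dep; intro;
                         apply functional_extensionality_dep; auto).
    subst; reflexivity. }
  set (u := fun t => ub (fun y => exists s (H : ltT s t), y = F s)).
  assert (Hu : forall t s, ltT s t -> leo ltT (F s) (u t)).
  { intros t s Hst. unfold u, ub.
    apply (epsilon_spec (inhabits t0) (fun u => forall y, (exists s (H : ltT s t), y = F s) -> leo ltT y u)).
    2: { exists s, Hst; reflexivity. }
    apply reg_bounded; auto. intro Hle. apply (seg_small HT t).
    eapply card_le_trans; [exact Hle|].
    assert (Hc : forall p : setT_of (fun y => exists s (H : ltT s t), y = F s),
               exists q : setT_of (fun s => ltT s t), proj1_sig p = F (proj1_sig q)).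
    { intros [y [s' [H' e]]]. exists (exist _ s' H'). exact e. }
    destruct (choice' _ Hc) as [k Hk]. exists k.
    intros [x Px] [y Py] E. assert (x = y).
    { pose proof (Hk (exist _ x Px)) as h1; pose proof (Hk (exist _ y Py)) as h2.
      simpl in h1, h2. rewrite h1, h2, E. reflexivity. }
    subst y. f_equal; apply proof_irrelevance. }
  set (P' := fun t a => leo ltT (u t) (f a) /\ ltT (f a) (F t)).
  assert (HP'pos : forall t, ~ I (P' t)).
  { intro t. unfold P'. rewrite (HF t). apply Hgp. }
  assert (HP'dis : forall s t a, ltT s t -> P' s a -> P' t a -> False).
  { intros s t a l [_ h1] [h2 _]. apply (wo_irr W (f a)).
    eapply (lt_leo_trans W); [exact h1|]. eapply leo_trans; eauto. }
  apply WS.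
  exists (fun t a => (t = t0 /\ ~ exists t', t' <> t0 /\ P' t' a) \/ (t <> t0 /\ P' t a)).
  split; [|split].
  - intros t Ht. destruct (classic (t = t0)) as [e|n].
    + apply (HP'pos t). eapply I_sub; [exact HI| |exact Ht]. intros a Pa.
      left. split; auto. intros [t' [n' Pt']]. subst t.
      destruct (wo_tri W t' t0) as [l|[l|l]]; [eapply HP'dis; eauto|contradiction|eapply HP'dis; eauto].
    + apply (HP'pos t). eapply I_sub; [exact HI| |exact Ht]. intros a Pa. right; auto.
  - intros i j a nij [[ei ni]|[ni Pi]] [[ej nj]|[nj Pj]].
    + subst; auto.
    + apply ni. exists j; auto.
    + apply nj. exists i; auto.
    + destruct (wo_tri W i j) as [l|[l|l]]; [eapply HP'dis; eauto|contradiction|eapply HP'dis; eauto].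
  - intro a. destruct (classic (exists t', t' <> t0 /\ P' t' a)) as [[t' [n Pt]]|n].
    + exists t'. right; auto.
    + exists t0. left; auto.
Qed.

Theorem theorem2p6
  (K : Type) (ltK : K -> K -> Prop) (HK : is_cardinal ltK)
  (T : Type) (ltT : T -> T -> Prop) (HT : is_regular ltT)
  (HTK : card_lt T K)
  (I : (K -> Prop) -> Prop) (HI : is_ideal ltK I) :
  let c1 := weakly_saturated T I /\ indecomposable T I in
  let c2 := forall B : T -> (K -> Prop),
      (forall i j x, leo ltT i j -> B i x -> B j x) ->
      exists istar : T, forall i, leo ltT istar i ->
        eq_mod I (B i) (fun x => exists j, B j x) in
  let c3 := forall A : T -> (K -> Prop),
      (forall i, positive I (A i)) ->
      exists x : K, forall i, exists j, leo ltT i j /\ A j x in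
  let c4 := forall (O : Type) (ltO : O -> O -> Prop), is_wellorder ltO ->
      forall S : K -> (O -> Prop),
      (forall a, card_lt (setT_of (S a)) T) ->
      forall h : T -> K -> O,
      (forall i a, S a (h i a)) ->
      (forall i j a, ltT i j -> leo ltO (h i a) (h j a)) ->
      exists istar : T, forall i, leo ltT istar i ->
        I (fun a => h i a <> h istar a) in
  let c5 := forall f : K -> T,
      exists beta : T, I (fun a => leo ltT beta (f a)) in
  (c1 <-> c2) /\ (c1 <-> c3) /\ (c1 <-> c4) /\ (c1 <-> c5).
Proof.
  cbv zeta.
  assert (h15 := c1_c5 HT HI). assert (h51 := c5_c1 HT HI).
  assert (h52 := c5_c2 HT HI). assert (h25 := c2_c5 HT HI).
  assert (h53 := c5_c3 HT HI). assert (h35 := c3_c5 HT HI).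
  assert (h54 := c5_c4 HT HI). assert (h45 := c4_c5 HT HI).
  split; [|split; [|split]]; split; intro H.
  - exact (h52 (h15 H)).
  - exact (h51 (h25 H)).
  - exact (h53 (h15 H)).
  - exact (h51 (h35 H)).
  - exact (h54 (h15 H)).
  - exact (h51 (h45 H)).
  - exact (h15 H).
  - exact (h51 H).
Qed.
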